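(* The Doob--Martin kernel of $(U_n)_{n \in \mathbb{N}_0}$ with reference state the empty word satisfies, for all $m,n\in\mathbb{N}_0$, $v \in \mathbb{W}_m$ and $w \in \mathbb{W}_{m+n}$, \[ K(v,w) = \binom{w}{v} \frac{\binom{2m}{m}}{\binom{m+n}{m}^2}. \]
   Context: For $n \in \mathbb{N}_0$, $\mathbb{W}_n$ denotes the set of words over the alphabet $\{a,b\}$ with exactly $n$ letters $a$ and $n$ letters $b$, and $\mathbb{W} := \bigsqcup_{n} \mathbb{W}_n$. For words $w,v$, $\binom{w}{v}$ denotes the number of occurrences of $v$ as a (not necessarily contiguous) sub-word of $w$. The Markov chain $(U_n)_{n\in\mathbb{N}_0}$ on $\mathbb{W}$ starts at the empty word $\emptyset$; given $U_n \in \mathbb{W}_n$, first a letter $a$ is inserted uniformly at random into one of the $2n+1$ slots of $U_n$, then a letter $b$ is inserted uniformly at random into one of the $2n+2$ slots of the resulting word, giving $U_{n+1}$. The Doob--Martin kernel with reference state $\emptyset$ is $K(v,w) := \mathbb{P}^v\{\text{the chain hits } w\}/\mathbb{P}^\emptyset\{\text{the chain hits } w\}$; for $v\in\mathbb{W}_m$, $w\in\mathbb{W}_{m+n}$ this equals $\mathbb{P}\{U_{m+n}=w\mid U_m=v\}/\mathbb{P}\{U_{m+n}=w\mid U_0=\emptyset\}$. *)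

(* Defs.v *)
From mathcomp Require Import all_boot all_order all_algebra.
Set Implicit Arguments. Unset Strict Implicit. Unset Printing Implicit Defensive.
Import GRing.Theory Num.Theory.
Local Open Scope ring_scope.

Notation la := true.
Notation lb := false.
Definition word := seq bool.

Definition inW (n : nat) (w : word) : bool :=
  (count_mem la w == n) && (count_mem lb w == n).

Definition ins (u : word) (i : nat) (x : bool) : word :=
  take i u ++ x :: drop i u.

(* [subcount w v] = binom(w, v): number of occurrences of v as a
   (not necessarily contiguous) subword of w, i.e. the number of index
   selections (masks) of w that spell v. *)
Definition subcount (w v : word) : nat :=
  #|[set m : (size w).-tuple bool | mask m w == v]|.

(* k-step transition probabilities of the chain: one step from u inserts
   a uniformly into one of the size u + 1 slots, then b uniformly into one
   of the size u + 2 slots of the result. *)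
Fixpoint trans (k : nat) (v w : word) : rat :=
  match k with
  | 0 => (v == w)%:R
  | k'.+1 =>
      \sum_(i < (size v).+1) \sum_(j < (size v).+2)
        trans k' (ins (ins v i la) j lb) w / ((size v).+1 * (size v).+2)%:R
  end.

(* Probability that the chain started at v ever hits w. Since every step
   increases the length by exactly 2, w can only be visited at step
   (size w - size v)/2. *)
Definition hitprob (v w : word) : rat :=
  if (size v <= size w)%N then trans ((size w - size v)./2) v w else 0.

Definition K (v w : word) : rat := hitprob v w / hitprob [::] w.

(* Main.v *)
Require Import Defs.
From mathcomp Require Import all_boot all_order all_algebra.
From mathcomp Require Import zify ring lra.
Import GRing.Theory Num.Theory.

Fixpoint sc (w v : word) : nat :=
  match w with
  | [::] => (v == [::])
  | x :: w' => sc w' v + (if v is y :: v' then (x == y) * sc w' v' else 0)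
  end.

Lemma sum_tupleS n (F : n.+1.-tuple bool -> nat) :
  \sum_(t : n.+1.-tuple bool) F t =
  \sum_(b : bool) \sum_(t : n.-tuple bool) F [tuple of b :: t].
Proof.
rewrite pair_bigA /=.
rewrite (reindex (fun p : bool * n.-tuple bool => [tuple of p.1 :: p.2])) //.
exists (fun t : n.+1.-tuple bool => (thead t, [tuple of behead t])).
  by move=> [b t] _ /=; congr pair; apply: val_inj.
by move=> t _; rewrite [in RHS](tuple_eta t).
Qed.

Lemma subcount_sum w v :
  subcount w v = \sum_(t : (size w).-tuple bool) (mask t w == v : nat).
Proof.
rewrite /subcount -sum1_card big_mkcond /=; apply: eq_bigr => t _.
by rewrite inE; case: (_ == _).
Qed.

Lemma sum_mask w v :
  \sum_(t : (size w).-tuple bool) (mask t w == v : nat) = sc w v.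
Proof.
elim: w v => [|x w IH] v /=.
  rewrite (big_pred1 [tuple]) /=; first by case: v.
  by move=> t; rewrite /= [t]tuple0; apply/esym/eqP.
rewrite sum_tupleS big_bool /= IH addnC; congr addn.
case: v => [|y v].
  by rewrite big1.
rewrite -IH big_distrr /=; apply: eq_bigr => t _.
rewrite [X in nat_of_bool X]eqseq_cons. by case: eqP => _ /=; rewrite ?mul1n ?mul0n.
Qed.

Lemma subcount_sc w v : subcount w v = sc w v.
Proof. by rewrite subcount_sum sum_mask. Qed.

Lemma sc_nil w : sc w [::] = 1%N.
Proof. by elim: w => //= x w ->; rewrite addn0. Qed.

Lemma sc_one w x : sc w [:: x] = count_mem x w.
Proof. by elim: w => //= z w ->; rewrite sc_nil muln1 addnC eq_sym. Qed.

Lemma ins_nil v i x : (ins v i x == [::]) = false.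
Proof. by rewrite /ins; case: (take _ _). Qed.

Lemma insS y v i x : ins (y :: v) i.+1 x = y :: ins v i x.
Proof. by []. Qed.

Lemma sumins x w v :
  (\sum_(i < (size v).+1) sc w (ins v i x) + sc w v * count_mem x v
   = sc w v * count_mem x w)%N.
Proof.
elim: w v => [|z w IH] v.
  rewrite big1 => [|i _]; last by rewrite /= ins_nil.
  by case: v => //=; rewrite mul1n.
case: v => [|y v].
  rewrite big_ord1 /= sc_nil sc_one !muln0 mul1n addn0.
  by rewrite muln1 addnC eq_sym.
have IH1 := IH (y :: v); have IH2 := IH v.
rewrite /= big_ord_recl /= in IH1.
rewrite big_ord_recl.
under eq_bigr => i _ do rewrite /= insS /=.
rewrite big_split /= -big_distrr /=.
rewrite /=.
move: IH1 IH2.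
set A := sc w _; set B := \sum_(i < _) sc w _; set C := \sum_(i < _) sc w _.
set P := sc w (y :: v); set Q := sc w v.
clearbody A B C P Q; move: (count_mem x v) (count_mem x w) => cv cw.
clear IH; by case: x; case: y; case: z => /=; nia.
Qed.

Lemma count_ins (p : pred bool) v i x : count p (ins v i x) = (p x + count p v)%N.
Proof.
rewrite /ins count_cat /= -{3}(cat_take_drop i v) count_cat; lia.
Qed.

Lemma size_ins v i x : size (ins v i x) = (size v).+1.
Proof. by rewrite /ins size_cat /= -{3}(cat_take_drop i v) size_cat addnS. Qed.

Lemma size_count (s : word) : size s = (count_mem true s + count_mem false s)%N.
Proof. elim: s => //= -[] s ->; lia. Qed.

Lemma sc_gt w v : (size w < size v)%N -> sc w v = 0%N.
Proof.
elim: w v => [|z w IH] [|y v] //= H.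
by rewrite (IH (y :: v)) ?(IH v) ?muln0 //=; lia.
Qed.

Lemma sc_eq w v : size v = size w -> sc w v = (v == w).
Proof.
elim: w v => [|z w IH] [|y v] //= H.
rewrite sc_gt /=; last by lia.
rewrite IH; last by lia.
rewrite eqseq_cons eq_sym; case: eqP => _; rewrite /= ?mul1n ?mul0n //.
Qed.

Lemma dsum w v k :
  count_mem true w = (count_mem true v + k.+1)%N ->
  count_mem false w = (count_mem false v + k.+1)%N ->
  (\sum_(i < (size v).+1) \sum_(j < (size v).+2) sc w (ins (ins v i la) j lb)
   = sc w v * k.+1 * k.+1)%N.
Proof.
move=> Ha Hb.
have E i : (\sum_(j < (size v).+2) sc w (ins (ins v i la) j lb)
            = sc w (ins v i la) * k.+1)%N.
  have := sumins lb w (ins v i la); rewrite size_ins count_ins /= Hb. move=> H.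
  move: H; set S := \sum_(_ < _) _; by rewrite add0n mulnDr addnC => /addnI.
under eq_bigr => i _ do rewrite E.
rewrite -big_distrl /=.
have := sumins la w v; rewrite Ha mulnDr addnC => /addnI ->.
done.
Qed.



Local Open Scope ring_scope.

Lemma trans_formula k : forall v w,
  count_mem true w = (count_mem true v + k)%N ->
  count_mem false w = (count_mem false v + k)%N ->
  trans k v w = (sc w v * (k`! * k`!) * (size v)`!)%N%:R / ((size v + 2 * k)`!)%N%:R.
Proof.
elim: k => [|k IH] v w Ha Hb.
  rewrite /= !addn0 muln1 (@sc_eq w v); last first.
    by rewrite !size_count; lia.
  rewrite natrM mulfK //.
  by rewrite pnatr_eq0 -lt0n fact_gt0.
rewrite /=.
have E i (j : 'I_(size v).+2) :
   trans k (ins (ins v i la) j lb) w =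
   (sc w (ins (ins v i la) j lb))%:R *
     ((k`! * k`! * (size v).+2`!)%N%:R / ((size v + 2 * k.+1)`!)%N%:R).
  rewrite IH; last 2 first.
  - by rewrite !count_ins /= Ha add0n add1n addSnnS.
  - by rewrite !count_ins /= Hb add0n add1n addSnnS.
  rewrite !size_ins mulrA -natrM !mulnA.
  by have -> : ((size v).+2 + 2 * k = size v + 2 * k.+1)%N by lia.
under eq_bigr => i _ do under eq_bigr => j _ do rewrite E -mulrA.
set c := (_ * _^-1)%R.
under eq_bigr => i _ do rewrite -big_distrl /= -natr_sum.
rewrite -big_distrl /= -natr_sum (dsum _ _ _ Ha Hb).
rewrite /c !factS !natrM.
have F1 : ((size v + 2 * k.+1)`!)%:R != 0 :> rat by rewrite pnatr_eq0 -lt0n fact_gt0.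
have F2 : ((size v).+1)%:R != 0 :> rat by rewrite pnatr_eq0.
have F3 : ((size v).+2)%:R != 0 :> rat by rewrite pnatr_eq0.
field.
rewrite F1 /=; have h : 0 <= (size v)%:R :> rat := ler0n _ _.
by apply/andP; split; apply: lt0r_neq0; lra.
Qed.

Theorem mainTheorem2 (m n : nat) (v w : word) :
  inW m v -> inW (m + n) w ->
  K v w = (subcount w v)%:R * ('C(2 * m, m))%:R / (('C(m + n, m) ^ 2)%N)%:R.
Proof.
move=> /andP[/eqP Hva /eqP Hvb] /andP[/eqP Hwa /eqP Hwb].
have Sv : size v = (2 * m)%N by rewrite size_count Hva Hvb; lia.
have Sw : size w = (2 * (m + n))%N by rewrite size_count Hwa Hwb; lia.
rewrite /K /hitprob Sv Sw /=.
have -> : (2 * m <= 2 * (m + n))%N by lia.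
have -> : ((2 * (m + n) - 2 * m)./2 = n)%N.
  have -> : (2 * (m + n) - 2 * m = n.*2)%N by lia.
  by rewrite doubleK.
have -> : ((2 * (m + n) - 0)./2 = m + n)%N.
  have -> : (2 * (m + n) - 0 = (m + n).*2)%N by lia.
  by rewrite doubleK.
rewrite (@trans_formula n v w); last 2 first.
- by rewrite Hwa Hva.
- by rewrite Hwb Hvb.
rewrite (@trans_formula (m + n) [::] w); last 2 first.
- by rewrite Hwa.
- by rewrite Hwb.
rewrite sc_nil subcount_sc Sv /= add0n.
have -> : (2 * m + 2 * n = 2 * (m + n))%N by lia.
have B1 : ('C(2 * m, m) * (m`! * m`!))%N = (2 * m)`!.
  have := @bin_fact (2 * m) m; have -> : (2 * m - m = m)%N by lia.
  by apply; lia.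
have B2 : ('C(m + n, m) * (m`! * n`!))%N = (m + n)`!.
  have := @bin_fact (m + n) m; have -> : (m + n - m = n)%N by lia.
  by apply; lia.
rewrite -B1 -B2 !natrM.
have F1 : ((2 * (m + n))`!)%:R != 0 :> rat by rewrite pnatr_eq0 -lt0n fact_gt0.
have F2 : (m`!)%:R != 0 :> rat by rewrite pnatr_eq0 -lt0n fact_gt0.
have F3 : (n`!)%:R != 0 :> rat by rewrite pnatr_eq0 -lt0n fact_gt0.
have F4 : ('C(m + n, m))%:R != 0 :> rat by rewrite pnatr_eq0 -lt0n bin_gt0 leq_addr.
rewrite fact0 mul1r.
field.
by rewrite F1 F2 F3 F4.
Qed.
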